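(* For all complex $q$ with $|q|<1$, $$\sum_{n=0}^\infty \frac{q^{n^2+n}}{(-q;q)_n^2(1+q^{n+1})}=\frac{2}{(q;q)_\infty}\sum_{n=0}^\infty\frac{(-1)^n q^{\frac{3n(n+1)}{2}}(1-q^{2n+1})}{(1+q^n)(1+q^{n+1})}=\frac{2}{(q;q)_\infty}\sum_{n\in\mathbb Z}\frac{(-1)^n q^{\frac{3n(n+1)}{2}}}{1+q^n}.$$
   Context: For $n\in\mathbb N_0\cup\{\infty\}$, $(a;q)_n:=\prod_{j=0}^{n-1}(1-aq^j)$. *)

(* Defs.v *)
From Stdlib Require Import Reals ZArith.
Open Scope R_scope.

Record Cplx := mkC { Re : R; Im : R }.

Definition Czero : Cplx := mkC 0 0.
Definition Cone : Cplx := mkC 1 0.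
Definition RtoC (x : R) : Cplx := mkC x 0.
Definition Cadd (z w : Cplx) : Cplx := mkC (Re z + Re w) (Im z + Im w).
Definition Copp (z : Cplx) : Cplx := mkC (- Re z) (- Im z).
Definition Csub (z w : Cplx) : Cplx := Cadd z (Copp w).
Definition Cmul (z w : Cplx) : Cplx :=
  mkC (Re z * Re w - Im z * Im w) (Re z * Im w + Im z * Re w).
Definition Cinv (z : Cplx) : Cplx :=
  mkC (Re z / (Re z * Re z + Im z * Im z)) (- Im z / (Re z * Re z + Im z * Im z)).
Definition Cdiv (z w : Cplx) : Cplx := Cmul z (Cinv w).
Definition Cmod (z : Cplx) : R := sqrt (Re z * Re z + Im z * Im z).

Fixpoint Cpow (z : Cplx) (n : nat) : Cplx :=
  match n with O => Cone | S m => Cmul z (Cpow z m) end.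

Definition Csign (n : nat) : Cplx := Cpow (Copp Cone) n.

Fixpoint Csum (f : nat -> Cplx) (n : nat) : Cplx :=
  match n with O => Czero | S m => Cadd (Csum f m) (f m) end.

Fixpoint Cprod (f : nat -> Cplx) (n : nat) : Cplx :=
  match n with O => Cone | S m => Cmul (Cprod f m) (f m) end.

Definition Ccv (u : nat -> Cplx) (l : Cplx) : Prop :=
  forall eps : R, eps > 0 -> exists N : nat, forall n : nat, (n >= N)%nat ->
    Cmod (Csub (u n) l) < eps.

Definition Cseries (f : nat -> Cplx) (l : Cplx) : Prop := Ccv (Csum f) l.

Definition qpoch (a q : Cplx) (n : nat) : Cplx :=
  Cprod (fun j => Csub Cone (Cmul a (Cpow q j))) n.

Definition qpoch_inf (a q : Cplx) (l : Cplx) : Prop := Ccv (qpoch a q) l.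

(* Summand of the bilateral sum, (-1)^n q^{3n(n+1)/2} / (1+q^n), n in Z.
   For n = -m (m >= 1) we use the identical rational function
   (-1)^m q^{3m(m-1)/2 + m} / (1 + q^m)   (multiply num. and den. by q^m),
   which also gives the value at q = 0 by continuity. *)
Definition bilat_term (q : Cplx) (n : Z) : Cplx :=
  match n with
  | Z0 => Cdiv Cone (Cadd Cone Cone)
  | Zpos p => let k := Pos.to_nat p in
      Cdiv (Cmul (Csign k) (Cpow q (3 * k * (k + 1) / 2)))
           (Cadd Cone (Cpow q k))
  | Zneg p => let m := Pos.to_nat p in
      Cdiv (Cmul (Csign m) (Cpow q (3 * m * (m - 1) / 2 + m)))
           (Cadd Cone (Cpow q m))
  end.

(* Main.v *)
Require Import Defs.
From Stdlib Require Import Reals ZArith Lia Lra Field.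
From Coquelicot Require Complex.
Open Scope R_scope.

Lemma Cplx_eq (z w : Cplx) : Re z = Re w -> Im z = Im w -> z = w.
Proof. destruct z, w; simpl; intros; subst; reflexivity. Qed.

Lemma Cring : ring_theory Czero Cone Cadd Cmul Csub Copp (@eq Cplx).
Proof.
  constructor; intros; apply Cplx_eq; simpl; ring.
Qed.

Lemma Cone_neq0 : Cone <> Czero.
Proof. intro H. injection H. lra. Qed.

Lemma Cfield : field_theory Czero Cone Cadd Cmul Csub Copp Cdiv Cinv (@eq Cplx).
Proof.
  constructor.
  - exact Cring.
  - exact Cone_neq0.
  - reflexivity.
  - intros [a b] H. apply Cplx_eq; simpl.
    + assert (a*a+b*b <> 0).
      { intro H0. apply H. assert (a = 0) by nra. assert (b = 0) by nra. subst. reflexivity. }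
      field. auto.
    + assert (a*a+b*b <> 0).
      { intro H0. apply H. assert (a = 0) by nra. assert (b = 0) by nra. subst. reflexivity. }
      field. auto.
Qed.

Add Field CField : Cfield.

Definition toC (z : Cplx) : Complex.C := (Re z, Im z).

Lemma Cmod_toC z : Cmod z = Complex.Cmod (toC z).
Proof. unfold Cmod, Complex.Cmod, toC; simpl. f_equal. ring. Qed.

Lemma toC_mul a b : toC (Cmul a b) = Complex.Cmult (toC a) (toC b).
Proof. reflexivity. Qed.
Lemma toC_add a b : toC (Cadd a b) = Complex.Cplus (toC a) (toC b).
Proof. reflexivity. Qed.
Lemma toC_opp a : toC (Copp a) = Complex.Copp (toC a).
Proof. reflexivity. Qed.

Lemma Cmod_mul a b : Cmod (Cmul a b) = Cmod a * Cmod b.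
Proof. rewrite !Cmod_toC, toC_mul. apply Complex.Cmod_mult. Qed.
Lemma Cmod_triangle a b : Cmod (Cadd a b) <= Cmod a + Cmod b.
Proof. rewrite !Cmod_toC, toC_add. apply Complex.Cmod_triangle. Qed.
Lemma Cmod_opp a : Cmod (Copp a) = Cmod a.
Proof. rewrite !Cmod_toC, toC_opp. apply Complex.Cmod_opp. Qed.
Lemma Cmod_ge0 a : 0 <= Cmod a.
Proof. rewrite Cmod_toC. apply Complex.Cmod_ge_0. Qed.
Lemma Cmod_one : Cmod Cone = 1.
Proof. unfold Cmod; simpl. replace (1*1+0*0) with 1 by ring. apply sqrt_1. Qed.
Lemma Cmod_zero : Cmod Czero = 0.
Proof. unfold Cmod; simpl. replace (0*0+0*0) with 0 by ring. apply sqrt_0. Qed.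
Lemma Cmod_eq0 a : Cmod a = 0 -> a = Czero.
Proof. rewrite Cmod_toC. intro H. apply Complex.Cmod_eq_0 in H.
  unfold toC in H. injection H. intros. apply Cplx_eq; simpl; auto. Qed.
Lemma Cmod_neq0 a : a <> Czero -> 0 < Cmod a.
Proof. intro H. destruct (Cmod_ge0 a) as [h|h]; auto. exfalso; apply H, Cmod_eq0; auto. Qed.
Lemma Cmod_sub a b : Cmod (Csub a b) <= Cmod a + Cmod b.
Proof. unfold Csub. rewrite <- (Cmod_opp b). apply Cmod_triangle. Qed.
Lemma Cmod_sub_ge a b : Cmod a - Cmod b <= Cmod (Csub a b).
Proof. assert (a = Cadd (Csub a b) b) by ring. rewrite H at 1.
  pose proof (Cmod_triangle (Csub a b) b). lra. Qed.
Lemma Cmod_add_ge a b : Cmod a - Cmod b <= Cmod (Cadd a b).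
Proof. assert (Cadd a b = Csub a (Copp b)) by ring. rewrite H, <- (Cmod_opp b). apply Cmod_sub_ge. Qed.
Lemma Cmod_pow a n : Cmod (Cpow a n) = Cmod a ^ n.
Proof. induction n; simpl. apply Cmod_one. rewrite Cmod_mul, IHn. reflexivity. Qed.
Lemma Cmod_inv a : a <> Czero -> Cmod (Cinv a) = / Cmod a.
Proof. intro H. pose proof (Cmod_neq0 _ H).
  assert (Cmul (Cinv a) a = Cone) by (field; auto).
  apply (f_equal Cmod) in H1. rewrite Cmod_mul, Cmod_one in H1.
  field_simplify_eq; [|lra]. rewrite <- H1. ring. Qed.
Lemma Cmod_div a b : b <> Czero -> Cmod (Cdiv a b) = Cmod a / Cmod b.
Proof. intro H. unfold Cdiv. rewrite Cmod_mul, Cmod_inv; auto. Qed.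
Lemma Re_le a : Rabs (Re a) <= Cmod a.
Proof. rewrite Cmod_toC. apply (Complex.re_le_Cmod (toC a)). Qed.
Lemma Im_le a : Rabs (Im a) <= Cmod a.
Proof. rewrite Cmod_toC. pose proof (Complex.Rmax_Cmod (toC a)). simpl in H.
  eapply Rle_trans; [|exact H]. apply Rmax_r. Qed.


Lemma Ccv_unique u a b : Ccv u a -> Ccv u b -> a = b.
Proof.
  intros Ha Hb. destruct (Req_dec (Cmod (Csub a b)) 0) as [E|E].
  - assert (Csub a b = Czero) by (apply Cmod_eq0; auto).
    assert (a = Cadd (Csub a b) b) by ring. rewrite H in H0. rewrite H0. ring.
  - pose proof (Cmod_ge0 (Csub a b)).
    assert (e : Cmod (Csub a b) / 2 > 0) by lra.
    destruct (Ha _ e) as [N1 H1]. destruct (Hb _ e) as [N2 H2].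
    specialize (H1 (max N1 N2) ltac:(lia)). specialize (H2 (max N1 N2) ltac:(lia)).
    assert (Csub a b = Csub (Csub (u (max N1 N2)) b) (Csub (u (max N1 N2)) a)) by ring.
    pose proof (Cmod_sub (Csub (u (max N1 N2)) b) (Csub (u (max N1 N2)) a)).
    rewrite <- H0 in H3. lra.
Qed.

Lemma Ccv_const c : Ccv (fun _ => c) c.
Proof. intros e He. exists O. intros. replace (Csub c c) with Czero by ring. rewrite Cmod_zero. lra. Qed.

Lemma Ccv_ext u v l : (forall n, u n = v n) -> Ccv u l -> Ccv v l.
Proof. intros E H e He. destruct (H e He) as [N HN]. exists N. intros n Hn. rewrite <- E. auto. Qed.

Lemma Ccv_ext_ev u v l N0 : (forall n, (n >= N0)%nat -> u n = v n) -> Ccv u l -> Ccv v l.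
Proof. intros E H e He. destruct (H e He) as [N HN]. exists (max N N0). intros n Hn.
  rewrite <- E by lia. apply HN; lia. Qed.

Lemma Ccv_add u v a b : Ccv u a -> Ccv v b -> Ccv (fun n => Cadd (u n) (v n)) (Cadd a b).
Proof.
  intros Hu Hv e He. destruct (Hu (e/2) ltac:(lra)) as [N1 H1]. destruct (Hv (e/2) ltac:(lra)) as [N2 H2].
  exists (max N1 N2). intros n Hn.
  replace (Csub (Cadd (u n) (v n)) (Cadd a b)) with (Cadd (Csub (u n) a) (Csub (v n) b)) by ring.
  pose proof (Cmod_triangle (Csub (u n) a) (Csub (v n) b)).
  specialize (H1 n ltac:(lia)). specialize (H2 n ltac:(lia)). lra.
Qed.

Lemma Ccv_mul u v a b : Ccv u a -> Ccv v b -> Ccv (fun n => Cmul (u n) (v n)) (Cmul a b).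
Proof.
  intros Hu Hv e He.
  set (A := Cmod a + 1). set (B := Cmod b + 1).
  assert (HA : A > 0) by (pose proof (Cmod_ge0 a); unfold A; lra).
  assert (HB : B > 0) by (pose proof (Cmod_ge0 b); unfold B; lra).
  destruct (Hu (Rmin 1 (e/(2*B))) ltac:(apply Rmin_glb_lt; [lra| apply Rdiv_lt_0_compat; lra])) as [N1 H1].
  destruct (Hv (Rmin 1 (e/(2*A))) ltac:(apply Rmin_glb_lt; [lra| apply Rdiv_lt_0_compat; lra])) as [N2 H2].
  exists (max N1 N2). intros n Hn.
  specialize (H1 n ltac:(lia)). specialize (H2 n ltac:(lia)).
  replace (Csub (Cmul (u n) (v n)) (Cmul a b)) with (Cadd (Cmul (Csub (u n) a) (v n)) (Cmul a (Csub (v n) b))) by ring.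
  eapply Rle_lt_trans. apply Cmod_triangle. rewrite !Cmod_mul.
  assert (Cmod (v n) <= B).
  { assert (v n = Cadd (Csub (v n) b) b) by ring. rewrite H. eapply Rle_trans. apply Cmod_triangle.
    unfold B. pose proof (Rmin_l 1 (e/(2*A))). lra. }
  pose proof (Rmin_r 1 (e/(2*B))). pose proof (Rmin_r 1 (e/(2*A))).
  pose proof (Cmod_ge0 (Csub (u n) a)). pose proof (Cmod_ge0 (Csub (v n) b)). pose proof (Cmod_ge0 a).
  pose proof (Cmod_ge0 (v n)).
  set (x := Cmod (Csub (u n) a)) in *. set (y := Cmod (Csub (v n) b)) in *.
  assert (x < e/(2*B)) by lra. assert (y < e/(2*A)) by lra.
  assert (e/(2*B)*B = e/2) by (field; lra). assert (A*(e/(2*A)) = e/2) by (field; lra).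
  assert (x * Cmod (v n) <= e/(2*B) * B) by (apply Rmult_le_compat; lra).
  assert (Cmod a * y <= A * (e/(2*A))) by (apply Rmult_le_compat; unfold A in *; lra).
  assert (Cmod a * y < A * (e/(2*A)) \/ x * Cmod (v n) < e/(2*B)*B).
  { destruct (Req_dec y 0) as [Z|Z].
    - left. rewrite Z, Rmult_0_r. lra.
    - left. apply Rle_lt_trans with (Cmod a * (e/(2*A))).
      + apply Rmult_le_compat_l; lra.
      + apply Rmult_lt_compat_r. apply Rdiv_lt_0_compat; lra. unfold A; lra. }
  lra.
Qed.

Lemma Ccv_inv v b : b <> Czero -> Ccv v b -> Ccv (fun n => Cinv (v n)) (Cinv b).
Proof.
  intros Hb Hv e He. pose proof (Cmod_neq0 _ Hb) as Hmb.
  set (m := Cmod b) in *.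
  destruct (Hv (Rmin (m/2) (e*m*m/2)) ltac:(apply Rmin_glb_lt; [lra| apply Rdiv_lt_0_compat; try lra; repeat apply Rmult_lt_0_compat; lra])) as [N HN].
  exists N. intros n Hn. specialize (HN n Hn).
  pose proof (Rmin_l (m/2) (e*m*m/2)). pose proof (Rmin_r (m/2) (e*m*m/2)).
  assert (Hvn : Cmod (v n) >= m/2).
  { pose proof (Cmod_sub_ge b (v n)). replace (Csub b (v n)) with (Copp (Csub (v n) b)) in H1 by ring.
    rewrite Cmod_opp in H1. fold m in H1. lra. }
  assert (vn0 : v n <> Czero). { intro Z. rewrite Z, Cmod_zero in Hvn. lra. }
  replace (Csub (Cinv (v n)) (Cinv b)) with (Cdiv (Csub b (v n)) (Cmul (v n) b)) by (field; auto).
  assert (Cmul (v n) b <> Czero). { intro Z. apply (f_equal Cmod) in Z. rewrite Cmod_mul, Cmod_zero in Z.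
    fold m in Z. nra. }
  rewrite Cmod_div by auto. rewrite Cmod_mul. fold m.
  replace (Csub b (v n)) with (Copp (Csub (v n) b)) by ring. rewrite Cmod_opp.
  apply Rlt_le_trans with ((e*m*m/2) / (Cmod (v n) * m)).
  - unfold Rdiv. apply Rmult_lt_compat_r. apply Rinv_0_lt_compat. nra. lra.
  - apply Rle_trans with ((e*m*m/2)/(m/2*m)).
    + unfold Rdiv. apply Rmult_le_compat_l. nra. apply Rinv_le_contravar. nra. nra.
    + right. field. lra.
Qed.

Lemma Ccv_div u v a b : b <> Czero -> Ccv u a -> Ccv v b -> Ccv (fun n => Cdiv (u n) (v n)) (Cdiv a b).
Proof. intros. unfold Cdiv. apply Ccv_mul; auto. apply Ccv_inv; auto. Qed.

Lemma Ccv_scal c u a : Ccv u a -> Ccv (fun n => Cmul c (u n)) (Cmul c a).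
Proof. intro. apply Ccv_mul; auto. apply Ccv_const. Qed.

Lemma Ccv_shift_sub u l k : Ccv u l -> Ccv (fun N => u (N - k)%nat) l.
Proof. intros H e He. destruct (H e He) as [N HN]. exists (N + k)%nat. intros n Hn. apply HN. lia. Qed.

Lemma Ccv_shift_add u l k : Ccv u l -> Ccv (fun N => u (N + k)%nat) l.
Proof. intros H e He. destruct (H e He) as [N HN]. exists N. intros n Hn. apply HN. lia. Qed.

Lemma Ccv_mod_ge u l L : Ccv u l -> (forall n, L <= Cmod (u n)) -> L <= Cmod l.
Proof.
  intros H HL. destruct (Rle_lt_dec L (Cmod l)) as [h|h]; auto.
  destruct (H (L - Cmod l) ltac:(lra)) as [N HN]. specialize (HN N (le_n _)).
  pose proof (Cmod_sub_ge (u N) l). specialize (HL N). lra.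
Qed.

Lemma Ccv_mod_le_ev u l a B : Ccv u l -> (exists N0, forall n, (n >= N0)%nat -> Cmod (Csub (u n) a) <= B) ->
  Cmod (Csub l a) <= B.
Proof.
  intros H [N0 HB]. destruct (Rle_lt_dec (Cmod (Csub l a)) B) as [h|h]; auto.
  destruct (H (Cmod (Csub l a) - B) ltac:(lra)) as [N HN].
  specialize (HN (max N N0) ltac:(lia)). specialize (HB (max N N0) ltac:(lia)).
  assert (E : Csub l a = Csub (Csub (u (max N N0)) a) (Csub (u (max N N0)) l)) by ring.
  pose proof (Cmod_sub (Csub (u (max N N0)) a) (Csub (u (max N N0)) l)). rewrite <- E in H0. lra.
Qed.

Lemma Cmod_mkC a b : Cmod (mkC a b) <= Rabs a + Rabs b.
Proof.
  replace (mkC a b) with (Cadd (mkC a 0) (mkC 0 b)) by (apply Cplx_eq; simpl; ring).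
  eapply Rle_trans. apply Cmod_triangle. unfold Cmod; simpl.
  replace (a*a+0*0) with (Rsqr a) by (unfold Rsqr; ring).
  replace (0*0+b*b) with (Rsqr b) by (unfold Rsqr; ring).
  rewrite !sqrt_Rsqr_abs. lra.
Qed.

Lemma Ccauchy u : (forall e, e > 0 -> exists N, forall m n, (m >= N)%nat -> (n >= N)%nat -> Cmod (Csub (u m) (u n)) < e) ->
  exists l, Ccv u l.
Proof.
  intros H.
  assert (CR : Cauchy_crit (fun n => Re (u n))).
  { intros e He. destruct (H e He) as [N HN]. exists N. intros m n Hm Hn. unfold R_dist.
    eapply Rle_lt_trans; [|apply (HN m n Hm Hn)]. apply (Re_le (Csub (u m) (u n))). }
  assert (CI : Cauchy_crit (fun n => Im (u n))).
  { intros e He. destruct (H e He) as [N HN]. exists N. intros m n Hm Hn. unfold R_dist.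
    eapply Rle_lt_trans; [|apply (HN m n Hm Hn)]. apply (Im_le (Csub (u m) (u n))). }
  destruct (R_complete _ CR) as [a Ha]. destruct (R_complete _ CI) as [b Hb].
  exists (mkC a b). intros e He.
  destruct (Ha (e/2) ltac:(lra)) as [N1 H1]. destruct (Hb (e/2) ltac:(lra)) as [N2 H2].
  exists (max N1 N2). intros n Hn. specialize (H1 n ltac:(lia)). specialize (H2 n ltac:(lia)).
  unfold R_dist in *.
  replace (Csub (u n) (mkC a b)) with (mkC (Re (u n) - a) (Im (u n) - b)) by (apply Cplx_eq; simpl; ring).
  eapply Rle_lt_trans. apply Cmod_mkC. lra.
Qed.


Lemma pow_le1' r n : 0 <= r <= 1 -> r ^ n <= 1.
Proof. intros H. induction n; simpl. lra. pose proof (pow_le r n (proj1 H)). nra. Qed.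

Lemma pow_le_mono_dec r a b : 0 <= r <= 1 -> (b <= a)%nat -> r ^ a <= r ^ b.
Proof.
  intros Hr Hab. replace a with (b + (a - b))%nat by lia. rewrite pow_add.
  pose proof (pow_le r b (proj1 Hr)).
  assert (r ^ (a - b) <= 1) by (apply pow_le1'; lra).
  assert (0 <= r ^ (a-b)) by (apply pow_le; lra). nra.
Qed.

Lemma small_pow r e : 0 <= r < 1 -> e > 0 -> exists N, forall n, (n >= N)%nat -> r ^ n < e.
Proof.
  intros Hr He. destruct (pow_lt_1_zero r ltac:(rewrite Rabs_right; lra) e He) as [N HN].
  exists N. intros n Hn. specialize (HN n Hn). rewrite Rabs_right in HN; auto.
  apply Rle_ge, pow_le; lra.
Qed.

Lemma Csum_S f n : Csum f (S n) = Cadd (Csum f n) (f n).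
Proof. reflexivity. Qed.

Lemma tail_bound f C r n d : 0 <= r < 1 ->
  (forall k, (n <= k < n + d)%nat -> Cmod (f k) <= C * r ^ k) ->
  Cmod (Csub (Csum f (n + d)) (Csum f n)) <= C * (r ^ n - r ^ (n + d)) / (1 - r).
Proof.
  intros Hr. induction d as [|d IH]; intros H.
  - rewrite Nat.add_0_r. replace (Csub (Csum f n) (Csum f n)) with Czero by ring.
    rewrite Cmod_zero. right. field. lra.
  - rewrite Nat.add_succ_r, Csum_S.
    replace (Csub (Cadd (Csum f (n + d)) (f (n + d)%nat)) (Csum f n)) with
      (Cadd (Csub (Csum f (n + d)) (Csum f n)) (f (n+d)%nat)) by ring.
    eapply Rle_trans. apply Cmod_triangle.
    assert (H1 := IH ltac:(intros; apply H; lia)).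
    assert (H2 := H (n + d)%nat ltac:(lia)).
    apply Rle_trans with (C * (r ^ n - r ^ (n + d)) / (1 - r) + C * r ^ (n + d)); [lra|].
    right. simpl. field. lra.
Qed.

Lemma tail_bound' f C r n d : 0 <= C -> 0 <= r < 1 ->
  (forall k, (n <= k < n + d)%nat -> Cmod (f k) <= C * r ^ k) ->
  Cmod (Csub (Csum f (n + d)) (Csum f n)) <= C * r ^ n / (1 - r).
Proof.
  intros HC Hr H. eapply Rle_trans. apply tail_bound; eauto.
  unfold Rdiv. apply Rmult_le_compat_r. apply Rlt_le, Rinv_0_lt_compat; lra.
  pose proof (pow_le r (n+d) (proj1 Hr)). nra.
Qed.

Lemma geom_small C r e : 0 <= C -> 0 <= r < 1 -> e > 0 -> exists N, forall n, (n >= N)%nat -> C * r ^ n / (1 - r) < e.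
Proof.
  intros HC Hr He. destruct (small_pow r (e * (1 - r) / (C + 1)) Hr) as [N HN].
  { apply Rdiv_lt_0_compat; nra. }
  exists N. intros n Hn. specialize (HN n Hn). pose proof (pow_le r n (proj1 Hr)).
  apply Rmult_lt_compat_l with (r := C + 1) in HN; [|lra].
  replace ((C+1) * (e * (1 - r) / (C + 1))) with (e * (1 - r)) in HN by (field; lra).
  apply Rmult_lt_reg_r with (1 - r); [lra|]. replace (C * r ^ n / (1 - r) * (1 - r)) with (C * r ^ n) by (field; lra).
  nra.
Qed.

Lemma series_geom f C r : 0 <= C -> 0 <= r < 1 -> (forall k, Cmod (f k) <= C * r ^ k) ->
  exists l, Cseries f l.
Proof.
  intros HC Hr H. apply Ccauchy. intros e He.
  destruct (geom_small C r e HC Hr He) as [N HN]. exists N. intros m n Hm Hn.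
  destruct (Nat.le_ge_cases n m) as [h|h].
  - replace m with (n + (m - n))%nat by lia. eapply Rle_lt_trans; [apply (tail_bound' f C r); [lra|lra|intros; apply H]|apply HN; lia].
  - replace (Csub (Csum f m) (Csum f n)) with (Copp (Csub (Csum f n) (Csum f m))) by ring. rewrite Cmod_opp.
    replace n with (m + (n - m))%nat by lia. eapply Rle_lt_trans; [apply (tail_bound' f C r); [lra|lra|intros; apply H]|apply HN; lia].
Qed.

Lemma series_tail f C r G n : 0 <= C -> 0 <= r < 1 -> (forall k, Cmod (f k) <= C * r ^ k) ->
  Cseries f G -> Cmod (Csub G (Csum f n)) <= C * r ^ n / (1 - r).
Proof.
  intros HC Hr H HG. apply (Ccv_mod_le_ev (Csum f)); auto.
  exists n. intros m Hm. replace m with (n + (m - n))%nat by lia. apply (tail_bound' f C r); auto.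
Qed.

Lemma Ccv_Csum_fin (f : nat -> nat -> Cplx) g K :
  (forall n, (n < K)%nat -> Ccv (fun N => f N n) (g n)) ->
  Ccv (fun N => Csum (f N) K) (Csum g K).
Proof.
  induction K; intros H.
  - simpl. apply Ccv_const.
  - simpl. apply Ccv_add. apply IHK; intros; apply H; lia. apply H; lia.
Qed.

Lemma tannery (f : nat -> nat -> Cplx) g C r G : 0 <= C -> 0 <= r < 1 ->
  (forall N n, (n <= N)%nat -> Cmod (f N n) <= C * r ^ n) ->
  (forall n, Cmod (g n) <= C * r ^ n) ->
  (forall n, Ccv (fun N => f N n) (g n)) ->
  Cseries g G ->
  Ccv (fun N => Csum (f N) (S N)) G.
Proof.
  intros HC Hr Hf Hg Hcv HG e He.
  destruct (geom_small C r (e/4) HC Hr ltac:(lra)) as [K HK]. specialize (HK K (le_n _)).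
  destruct (Ccv_Csum_fin f g K (fun n _ => Hcv n) (e/4) ltac:(lra)) as [N1 HN1].
  exists (max N1 K). intros N HN.
  specialize (HN1 N ltac:(lia)).
  assert (T1 : Cmod (Csub (Csum (f N) (S N)) (Csum (f N) K)) <= C * r ^ K / (1 - r)).
  { replace (S N) with (K + (S N - K))%nat by lia. apply (tail_bound' _ C r); auto. intros k Hk. apply Hf. lia. }
  assert (T2 := series_tail g C r G K HC Hr Hg HG).
  replace (Csub (Csum (f N) (S N)) G) with
    (Cadd (Cadd (Csub (Csum (f N) (S N)) (Csum (f N) K)) (Csub (Csum (f N) K) (Csum g K))) (Copp (Csub G (Csum g K)))) by ring.
  eapply Rle_lt_trans. apply Cmod_triangle. rewrite Cmod_opp.
  pose proof (Cmod_triangle (Csub (Csum (f N) (S N)) (Csum (f N) K)) (Csub (Csum (f N) K) (Csum g K))).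
  lra.
Qed.


Lemma Ccv_from_diff u C r : 0 <= C -> 0 <= r < 1 -> (forall k, Cmod (Csub (u (S k)) (u k)) <= C * r ^ k) ->
  exists l, Ccv u l.
Proof.
  intros HC Hr H. destruct (series_geom (fun k => Csub (u (S k)) (u k)) C r HC Hr H) as [l Hl].
  exists (Cadd (u O) l).
  assert (E : forall n, u n = Cadd (u O) (Csum (fun k => Csub (u (S k)) (u k)) n)).
  { induction n; simpl. ring. rewrite IHn at 1. ring. }
  eapply Ccv_ext. intro n. symmetry. apply E.
  apply Ccv_add. apply Ccv_const. exact Hl.
Qed.

Lemma qpoch_S a q n : qpoch a q (S n) = Cmul (qpoch a q n) (Csub Cone (Cmul a (Cpow q n))).
Proof. reflexivity. Qed.

Lemma Cpow_S q n : Cpow q (S n) = Cmul q (Cpow q n).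
Proof. reflexivity. Qed.

Lemma Cpow_add q a b : Cpow q (a + b) = Cmul (Cpow q a) (Cpow q b).
Proof. induction a; simpl. ring. rewrite IHa. ring. Qed.

Lemma Cpow_mul q a b : Cpow q (a * b) = Cpow (Cpow q a) b.
Proof. induction b. rewrite Nat.mul_0_r. reflexivity.
  rewrite Nat.mul_succ_r, Cpow_add, IHb. simpl. ring. Qed.

Section Q.
Variable q : Cplx.
Hypothesis hq : Cmod q < 1.
Let r := Cmod q.

Lemma r_bounds : 0 <= r < 1.
Proof. split. apply Cmod_ge0. exact hq. Qed.

Lemma factor_lb a j : Cmod a = r -> 1 - r ^ (S j) <= Cmod (Csub Cone (Cmul a (Cpow q j))).
Proof.
  intros Ha. pose proof (Cmod_sub_ge Cone (Cmul a (Cpow q j))). rewrite Cmod_one, Cmod_mul, Cmod_pow, Ha in H.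
  simpl. exact H.
Qed.

Lemma factor_ub a j : Cmod a = r -> Cmod (Csub Cone (Cmul a (Cpow q j))) <= 1 + r ^ (S j).
Proof.
  intros Ha. pose proof (Cmod_sub Cone (Cmul a (Cpow q j))). rewrite Cmod_one, Cmod_mul, Cmod_pow, Ha in H.
  simpl. exact H.
Qed.

Lemma exp_lb x : 0 <= x <= r -> exp (- (x / (1 - r))) <= 1 - x.
Proof.
  intros Hx. pose proof r_bounds. rewrite exp_Ropp.
  pose proof (exp_ineq1_le (x / (1 - r))). pose proof (exp_pos (x/(1-r))).
  assert (1 + x / (1 - r) >= 1 / (1 - x)).
  { assert (x < 1) by lra. apply Rle_ge.
    apply Rle_trans with (1 + x / (1 - x)).
    - right. field. lra.
    - apply Rplus_le_compat_l. unfold Rdiv. apply Rmult_le_compat_l. lra. apply Rinv_le_contravar; lra. }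
  assert (1 / (1 - x) <= exp (x / (1 - r))) by lra.
  assert (x < 1) by lra.
  apply Rmult_le_reg_l with (exp (x / (1 - r))); auto.
  rewrite Rinv_r by lra. 
  apply Rmult_le_reg_r with (/ (1 - x)). apply Rinv_0_lt_compat; lra.
  rewrite Rmult_assoc, Rinv_r by lra. unfold Rdiv in H3. lra.
Qed.

Definition Lq := exp (- (r / ((1 - r) * (1 - r)))).
Definition Uq := exp (r / (1 - r)).

Lemma Lq_pos : 0 < Lq.
Proof. apply exp_pos. Qed.

Lemma qpoch_lb_aux a n : Cmod a = r ->
  exp (- ((r - r ^ (S n)) / ((1 - r) * (1 - r)))) <= Cmod (qpoch a q n).
Proof.
  intros Ha. pose proof r_bounds. induction n.
  - simpl. unfold qpoch; simpl. rewrite Cmod_one. replace (r - r * 1) with 0 by ring.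
    unfold Rdiv. rewrite Rmult_0_l, Ropp_0, exp_0. lra.
  - rewrite qpoch_S, Cmod_mul.
    pose proof (factor_lb a n Ha).
    assert (0 <= r ^ S n <= r).
    { split. apply pow_le; lra. simpl. pose proof (pow_le1' r n ltac:(lra)). pose proof (Cmod_ge0 q). nra. }
    pose proof (exp_lb (r ^ S n) H1).
    apply Rle_trans with (exp (- ((r - r ^ S n) / ((1 - r) * (1 - r)))) * exp (- (r ^ S n / (1 - r)))).
    + rewrite <- exp_plus. right. f_equal. simpl. field. lra.
    + apply Rmult_le_compat; try (left; apply exp_pos); lra.
Qed.

Lemma qpoch_lb a n : Cmod a = r -> Lq <= Cmod (qpoch a q n).
Proof.
  intros Ha. eapply Rle_trans; [|apply qpoch_lb_aux; auto]. pose proof r_bounds.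
  unfold Lq. destruct (Req_dec r 0) as [Z|Z].
  - right. f_equal. rewrite Z. simpl. field.
  - left. apply exp_increasing. apply Ropp_lt_contravar. unfold Rdiv.
    apply Rmult_lt_compat_r. apply Rinv_0_lt_compat. nra.
    pose proof (pow_lt (r) (S n) ltac:(lra)). lra.
Qed.

Lemma qpoch_ub_aux a n : Cmod a = r ->
  Cmod (qpoch a q n) <= exp ((r - r ^ (S n)) / (1 - r)).
Proof.
  intros Ha. pose proof r_bounds. induction n.
  - unfold qpoch; simpl. rewrite Cmod_one. replace (r - r * 1) with 0 by ring.
    unfold Rdiv. rewrite Rmult_0_l, exp_0. lra.
  - rewrite qpoch_S, Cmod_mul.
    pose proof (factor_ub a n Ha). pose proof (exp_ineq1_le (r ^ S n)).
    apply Rle_trans with (exp ((r - r ^ S n) / (1 - r)) * exp (r ^ S n)).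
    + apply Rmult_le_compat; try apply Cmod_ge0; lra.
    + rewrite <- exp_plus. right. f_equal. simpl. field. lra.
Qed.

Lemma qpoch_ub a n : Cmod a = r -> Cmod (qpoch a q n) <= Uq.
Proof.
  intros Ha. eapply Rle_trans; [apply qpoch_ub_aux; auto|]. pose proof r_bounds.
  unfold Uq. destruct (Req_dec r 0) as [Z|Z].
  - right. f_equal. rewrite Z. simpl. field.
  - left. apply exp_increasing. unfold Rdiv.
    apply Rmult_lt_compat_r. apply Rinv_0_lt_compat. nra.
    pose proof (pow_lt (r) (S n) ltac:(lra)). lra.
Qed.

Lemma qpoch_neq0 a n : Cmod a = r -> qpoch a q n <> Czero.
Proof. intros Ha Z. pose proof (qpoch_lb a n Ha). rewrite Z, Cmod_zero in H. pose proof Lq_pos. lra. Qed.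

Lemma qpoch_conv a : Cmod a = r -> exists P, Ccv (qpoch a q) P /\ P <> Czero.
Proof.
  intros Ha. pose proof r_bounds.
  destruct (Ccv_from_diff (qpoch a q) Uq r) as [P HP]; auto.
  - left. apply exp_pos.
  - intro k. rewrite qpoch_S.
    replace (Csub (Cmul (qpoch a q k) (Csub Cone (Cmul a (Cpow q k)))) (qpoch a q k)) with
      (Copp (Cmul (qpoch a q k) (Cmul a (Cpow q k)))) by ring.
    rewrite Cmod_opp, !Cmod_mul, Cmod_pow, Ha. change (Cmod q) with r.
    pose proof (qpoch_ub a k Ha). pose proof (pow_le r k ltac:(lra)).
    assert (r * r ^ k <= 1 * r ^ k) by (apply Rmult_le_compat_r; lra).
    pose proof (Cmod_ge0 (qpoch a q k)).
    apply Rmult_le_compat; nra.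
  - exists P. split; auto. intro Z. pose proof (Ccv_mod_ge _ _ _ HP (fun n => qpoch_lb a n Ha)).
    rewrite Z, Cmod_zero in H0. pose proof Lq_pos. lra.
Qed.

End Q.


Fixpoint tri (n : nat) : nat := match n with O => O | S m => (tri m + S m)%nat end.

Lemma Cpow_0 q : Cpow q 0 = Cone.
Proof. reflexivity. Qed.
Lemma Csign_S k : Csign (S k) = Cmul (Copp Cone) (Csign k).
Proof. reflexivity. Qed.
Lemma Csign_0 : Csign 0 = Cone.
Proof. reflexivity. Qed.

Lemma Cpow_2mul q k : Cpow q (2 * k) = Cmul (Cpow q k) (Cpow q k).
Proof. replace (2 * k)%nat with (k + k)%nat by lia. apply Cpow_add. Qed.

Ltac cnorm := repeat (rewrite ?Cpow_2mul, ?Cpow_add, ?Cpow_S, ?Cpow_0).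
Ltac nz := match goal with |- ?X <> Czero => let Z := fresh "Z" in intro Z; try change (mkC R1 R0) with Cone in Z; try change (mkC R0 R0) with Czero in Z;
  match goal with H : ?Y <> Czero |- _ => apply H; rewrite <- Z; ring end end.
Ltac cfield := field; repeat split; try assumption; try nz; try (let Z := fresh in intro Z; injection Z; intros; lra).

Ltac cnorm_in H := repeat (rewrite ?Cpow_2mul, ?Cpow_add, ?Cpow_S, ?Cpow_0 in H).

Section Q.
Variable q : Cplx.
Hypothesis hq : Cmod q < 1.

Lemma omp_neq0 k : (k >= 1)%nat -> Csub Cone (Cpow q k) <> Czero.
Proof.
  intros Hk Z. pose proof (Cmod_sub_ge Cone (Cpow q k)). rewrite Z, Cmod_zero, Cmod_one, Cmod_pow in H.
  pose proof (pow_lt_1_compat (Cmod q) k ltac:(split; [apply Cmod_ge0|exact hq]) ltac:(lia)). lra.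
Qed.

Lemma opp_neq0 k : Cadd Cone (Cpow q k) <> Czero.
Proof.
  intros Z. destruct k.
  - rewrite Cpow_0 in Z. injection Z. lra.
  - pose proof (Cmod_add_ge Cone (Cpow q (S k))). rewrite Z, Cmod_zero, Cmod_one, Cmod_pow in H.
    pose proof (pow_lt_1_compat (Cmod q) (S k) ltac:(split; [apply Cmod_ge0|exact hq]) ltac:(lia)). lra.
Qed.

Lemma Cmod_oppq : Cmod (Copp q) = Cmod q.
Proof. apply Cmod_opp. Qed.

Lemma p_neq0 n : qpoch q q n <> Czero.
Proof. apply qpoch_neq0; auto. Qed.
Lemma pm_neq0 n : qpoch (Copp q) q n <> Czero.
Proof. apply qpoch_neq0; auto. apply Cmod_opp. Qed.

Definition u m k := Cdiv (Cmul (Cmul (Csign k) (Cpow q (tri k))) (Cmul (Cpow q (m - k)) (Csub Cone (Cpow q (2*k+1)))))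
   (Cmul (qpoch q q (m-k)) (qpoch q q (m+k+1))).
Definition ucl m j := Cdiv (Cmul (Cmul (Csign j) (Cmul (Cpow q m) (Cpow q (tri j))))
      (Cmul (Csub Cone (Cpow q (S j))) (Csub Cone (Cpow q (m - j)))))
   (Cmul (Csub Cone (Cpow q m)) (Cmul (qpoch q q (m-j)) (qpoch q q (m+j+1)))).

Lemma unit_partial m j : (m >= 1)%nat -> (j <= m)%nat -> Csum (u m) (S j) = ucl m j.
Proof.
  intros Hm. induction j; intros Hj.
  - simpl Csum. unfold u, ucl. rewrite !Nat.sub_0_r. simpl tri.
    pose proof (omp_neq0 m Hm). pose proof (p_neq0 m). pose proof (p_neq0 (m+0+1)).
    cnorm. field. auto.
  - rewrite Csum_S, IHj by lia. unfold u, ucl.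
    destruct (Nat.le_exists_sub (S j) m Hj) as [d [Hd _]].
    subst m.
    replace (d + S j - j)%nat with (S d) by lia.
    replace (d + S j - S j)%nat with d by lia.
    replace (d + S j + j + 1)%nat with (S (d + j + j + 1)) by lia.
    replace (d + S j + S j + 1)%nat with (S (S (d + j + j + 1))) by lia.
    rewrite !qpoch_S.
    pose proof (omp_neq0 (d + S j) ltac:(lia)) as N1.
    pose proof (p_neq0 d) as N2. pose proof (p_neq0 (d + j + j + 1)) as N3.
    pose proof (omp_neq0 (S d) ltac:(lia)) as N4.
    pose proof (omp_neq0 (S (S (d + j + j + 1))) ltac:(lia)) as N5.
    pose proof (omp_neq0 (S (d + j + j + 1)) ltac:(lia)) as N6.
    simpl tri. rewrite !Csign_S.
    cnorm. cnorm_in N1. cnorm_in N4. cnorm_in N5. cnorm_in N6.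
    cfield.
Qed.

End Q.


Lemma Csum_ext_lt f g n : (forall k, (k < n)%nat -> f k = g k) -> Csum f n = Csum g n.
Proof. induction n; intros H; simpl. reflexivity. rewrite IHn, H; auto. Qed.
Lemma Csum_add f g n : Csum (fun k => Cadd (f k) (g k)) n = Cadd (Csum f n) (Csum g n).
Proof. induction n; simpl. ring. rewrite IHn. ring. Qed.
Lemma Csum_sub f g n : Csum (fun k => Csub (f k) (g k)) n = Csub (Csum f n) (Csum g n).
Proof. induction n; simpl. ring. rewrite IHn. ring. Qed.
Lemma Csum_scal c f n : Csum (fun k => Cmul c (f k)) n = Cmul c (Csum f n).
Proof. induction n; simpl. ring. rewrite IHn. ring. Qed.
Lemma Csum_shift f n : Csum f (S n) = Cadd (f O) (Csum (fun k => f (S k)) n).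
Proof. induction n; simpl. ring. simpl in IHn. rewrite IHn. ring. Qed.

Section Q.
Variable q : Cplx.
Hypothesis hq : Cmod q < 1.

Notation p := (qpoch q q).
Notation pm := (qpoch (Copp q) q).

Lemma unit_zero m : (m >= 1)%nat -> Csum (u q m) (S m) = Czero.
Proof.
  intros Hm. rewrite unit_partial by auto. unfold ucl. rewrite Nat.sub_diag, Cpow_0. unfold Cdiv. ring.
Qed.

Definition alpha' r := Cdiv (Cmul (Cmul (Cadd Cone Cone) (Csign r)) (Cmul (Cpow q (tri r)) (Csub Cone (Cpow q (2*r+1)))))
   (Cmul (Cadd Cone (Cpow q r)) (Cadd Cone (Cpow q (S r)))).
Definition beta n := Cinv (Cmul (pm n) (pm (S n))).
Definition Tn n r := Cdiv (alpha' r) (Cmul (p (n - r)) (p (n + r + 1))).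
Definition Bsum n := Csum (Tn n) (S n).

Lemma key_term m r : (r <= m)%nat ->
  Csub (Cmul (Tn m r) (Cmul (Cadd Cone (Cpow q m)) (Cadd Cone (Cpow q (S m)))))
       (Cdiv (Cmul (alpha' r) (Cmul (Csub Cone (Cpow q (m - r))) (Csub Cone (Cpow q (m + r + 1)))))
             (Cmul (p (m - r)) (p (m + r + 1))))
  = Cmul (Cadd Cone Cone) (u q m r).
Proof.
  intros Hr. destruct (Nat.le_exists_sub r m Hr) as [e [He _]]. subst m.
  unfold Tn, alpha', u. replace (e + r - r)%nat with e by lia.
  pose proof (p_neq0 q hq e) as N1. pose proof (p_neq0 q hq (e + r + r + 1)) as N2.
  pose proof (opp_neq0 q hq r) as N3. pose proof (opp_neq0 q hq (S r)) as N4.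
  cnorm. cnorm_in N3. cnorm_in N4. cfield.
Qed.

Lemma qpoch_0 a b : qpoch a b 0 = Cone.
Proof. reflexivity. Qed.

Lemma p_S n : p (S n) = Cmul (p n) (Csub Cone (Cpow q (S n))).
Proof. rewrite qpoch_S. reflexivity. Qed.

Lemma Csum_mul_r f c n : Cmul (Csum f n) c = Csum (fun k => Cmul (f k) c) n.
Proof. induction n; simpl. ring. rewrite <- IHn. ring. Qed.

Lemma bailey_pair n : Bsum n = beta n.
Proof.
  induction n as [|n IH].
  - unfold Bsum, Tn, beta, alpha'. simpl Csum. simpl tri. simpl Nat.sub. simpl Nat.add.
    rewrite !qpoch_S, !qpoch_0, !Csign_0, !Cpow_0.
    pose proof (omp_neq0 q hq 1 ltac:(lia)) as N1. pose proof (opp_neq0 q hq 1) as N2.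
    cnorm. cnorm_in N1. cnorm_in N2. cfield.
  - set (W := fun r => Cdiv (Cmul (alpha' r) (Cmul (Csub Cone (Cpow q (S n - r))) (Csub Cone (Cpow q (S n + r + 1)))))
             (Cmul (p (S n - r)) (p (S n + r + 1)))).
    assert (E1 : Bsum n = Csum W (S (S n))).
    { rewrite Csum_S. replace (W (S n)) with Czero.
      2:{ unfold W. rewrite Nat.sub_diag, Cpow_0. unfold Cdiv. ring. }
      unfold Bsum. rewrite Csum_ext_lt with (g := W). ring.
      intros r Hr. unfold W, Tn. replace (S n - r)%nat with (S (n - r)) by lia.
      replace (S n + r + 1)%nat with (S (n + r + 1)) by lia.
      rewrite !p_S. pose proof (p_neq0 q hq (n - r)). pose proof (p_neq0 q hq (n + r + 1)).
      pose proof (omp_neq0 q hq (S (n - r)) ltac:(lia)). pose proof (omp_neq0 q hq (S (n + r + 1)) ltac:(lia)).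
      cfield. }
    set (X := Cmul (Cadd Cone (Cpow q (S n))) (Cadd Cone (Cpow q (S (S n))))).
    assert (E2 : Csub (Cmul (Bsum (S n)) X) (Bsum n) = Czero).
    { rewrite E1. unfold Bsum. rewrite Csum_mul_r, <- Csum_sub.
      rewrite Csum_ext_lt with (g := fun r => Cmul (Cadd Cone Cone) (u q (S n) r)).
      - rewrite Csum_scal, unit_zero by lia. ring.
      - intros r Hr. unfold X, W. apply key_term. lia. }
    rewrite IH in E2.
    assert (H1 : Cmul (Bsum (S n)) X = beta n).
    { transitivity (Cadd (Csub (Cmul (Bsum (S n)) X) (beta n)) (beta n)). ring. rewrite E2. ring. }
    pose proof (opp_neq0 q hq (S n)) as N1. pose proof (opp_neq0 q hq (S (S n))) as N2.
    assert (HX : X <> Czero).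
    { unfold X. intro Z. apply (f_equal Cmod) in Z. rewrite Cmod_mul, Cmod_zero in Z.
      apply Rmult_integral in Z. destruct Z as [Z|Z]; apply Cmod_eq0 in Z; auto. }
    replace (Bsum (S n)) with (Cdiv (beta n) X) by (rewrite <- H1; field; auto).
    unfold beta, X. rewrite !qpoch_S.
    pose proof (pm_neq0 q hq n).
    cnorm. cnorm_in N1. cnorm_in N2. cfield.
Qed.
End Q.


Lemma Csum_swap (g : nat -> nat -> Cplx) N :
  Csum (fun n => Csum (g n) (S n)) (S N) = Csum (fun r => Csum (fun k => g (r + k)%nat r) (S (N - r))) (S N).
Proof.
  induction N.
  - simpl. reflexivity.
  - rewrite Csum_S, IHN. rewrite (Csum_S (fun r => Csum (fun k => g (r + k)%nat r) (S (S N - r))) (S N)).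
    rewrite Nat.sub_diag.
    rewrite Csum_ext_lt with (f := fun r => Csum (fun k => g (r + k)%nat r) (S (S N - r)))
      (g := fun r => Cadd (Csum (fun k => g (r + k)%nat r) (S (N - r))) (g (S N) r)).
    + rewrite Csum_add. rewrite (Csum_S (g (S N)) (S N)). simpl (Csum _ 1). rewrite Nat.add_0_r. ring.
    + intros r Hr. replace (S N - r)%nat with (S (N - r)) by lia. rewrite Csum_S.
      replace (r + S (N - r))%nat with (S N) by lia. reflexivity.
Qed.

Section Q.
Variable q : Cplx.
Hypothesis hq : Cmod q < 1.
Notation p := (qpoch q q).
Notation pm := (qpoch (Copp q) q).

Definition Cf M s k := Cdiv (Cpow q (k * k + s * k)) (Cmul (p (M - k)) (Cmul (p k) (p (s + k)))).

Lemma cauchy_fin M : forall s, Csum (Cf M s) (S M) = Cinv (Cmul (p M) (p (s + M))).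
Proof.
  induction M; intros s.
  - unfold Cf. simpl Csum. simpl Nat.sub. rewrite Nat.mul_0_r, Nat.add_0_r, Cpow_0, qpoch_0.
    pose proof (p_neq0 q hq s). cfield.
  - assert (HM : Cmul (Csub Cone (Cpow q (S M))) (Csum (Cf (S M) s) (S (S M))) =
                 Cadd (Csum (Cf M s) (S M)) (Cmul (Cpow q (S M + s)) (Csum (Cf M (S s)) (S M)))).
    { rewrite <- !Csum_scal.
      set (A := fun k => Cdiv (Cmul (Cpow q (k * k + s * k)) (Csub Cone (Cpow q (S M - k))))
                 (Cmul (p (S M - k)) (Cmul (p k) (p (s + k))))).
      set (B := fun k => Cdiv (Cmul (Cpow q (k * k + s * k)) (Cmul (Cpow q (S M - k)) (Csub Cone (Cpow q k))))
                 (Cmul (p (S M - k)) (Cmul (p k) (p (s + k))))).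
      rewrite Csum_ext_lt with (g := fun k => Cadd (A k) (B k)).
      2:{ intros k Hk. unfold A, B, Cf.
          assert (E : Cpow q (S M) = Cmul (Cpow q (S M - k)) (Cpow q k)).
          { rewrite <- Cpow_add. f_equal. lia. }
          rewrite E. pose proof (p_neq0 q hq (S M - k)). pose proof (p_neq0 q hq k). pose proof (p_neq0 q hq (s + k)).
          cfield. }
      rewrite Csum_add. f_equal.
      - rewrite Csum_S. replace (A (S M)) with Czero.
        2:{ unfold A. rewrite Nat.sub_diag, Cpow_0. unfold Cdiv. ring. }
        rewrite Csum_ext_lt with (g := Cf M s). ring.
        intros k Hk. unfold A, Cf. replace (S M - k)%nat with (S (M - k)) by lia. rewrite p_S by auto.
        pose proof (p_neq0 q hq (M - k)). pose proof (p_neq0 q hq k). pose proof (p_neq0 q hq (s + k)).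
        pose proof (omp_neq0 q hq (S (M - k)) ltac:(lia)). cfield.
      - rewrite Csum_shift. replace (B O) with Czero.
        2:{ unfold B. rewrite Cpow_0. unfold Cdiv. ring. }
        rewrite Csum_ext_lt with (g := fun k => Cmul (Cpow q (S M + s)) (Cf M (S s) k)). ring.
        intros k Hk. unfold B, Cf. destruct (Nat.le_exists_sub k M ltac:(lia)) as [e [He _]]. subst M.
        replace (S (e + k) - S k)%nat with e by lia. replace (e + k - k)%nat with e by lia.
        replace (s + S k)%nat with (S s + k)%nat by lia.
        replace (S k * S k + s * S k)%nat with (k * k + S s * k + (S k + s))%nat by ring.
        replace (S (e + k) + s)%nat with (e + (S k + s))%nat by lia.
        rewrite p_S by auto.
        pose proof (p_neq0 q hq e). pose proof (p_neq0 q hq k). pose proof (p_neq0 q hq (S s + k)).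
        pose proof (omp_neq0 q hq (S k) ltac:(lia)).
        cnorm. cnorm_in H2. cfield. }
    rewrite IHM, IHM in HM.
    pose proof (omp_neq0 q hq (S M) ltac:(lia)) as N1.
    pose proof (p_neq0 q hq M). pose proof (p_neq0 q hq (s + M)). pose proof (p_neq0 q hq (S s + M)).
    replace (Csum (Cf (S M) s) (S (S M))) with
      (Cdiv (Cmul (Csub Cone (Cpow q (S M))) (Csum (Cf (S M) s) (S (S M)))) (Csub Cone (Cpow q (S M)))) by (field; auto).
    rewrite HM. replace (s + S M)%nat with (S (s + M)) by lia. replace (S s + M)%nat with (S (s + M)) by lia.
    rewrite !p_S.
    pose proof (omp_neq0 q hq (S (s + M)) ltac:(lia)) as N2.
    replace (S M + s)%nat with (S (s + M)) by lia.
    cnorm. cnorm_in N1. cnorm_in N2. cfield.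
Qed.
Lemma fin_bailey N :
  Csum (fun n => Cmul (Cpow q (n*n+n)) (Cdiv (beta q n) (p (N - n)))) (S N) =
  Csum (fun r => Cdiv (Cmul (Cpow q (r*r+r)) (alpha' q r)) (Cmul (p (N - r)) (p (N + r + 1)))) (S N).
Proof.
  rewrite Csum_ext_lt with (g := fun n => Csum (fun r => Cmul (Cdiv (Cpow q (n*n+n)) (p (N - n))) (Tn q n r)) (S n)).
  2:{ intros n Hn. rewrite <- (bailey_pair q hq n). unfold Bsum. rewrite Csum_scal.
      unfold Cdiv. ring. }
  rewrite (Csum_swap (fun n r => Cmul (Cdiv (Cpow q (n*n+n)) (p (N - n))) (Tn q n r))).
  apply Csum_ext_lt. intros r Hr.
  rewrite Csum_ext_lt with (g := fun k => Cmul (Cmul (alpha' q r) (Cpow q (r*r+r))) (Cf (N - r) (2*r+1) k)).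
  2:{ intros k Hk. unfold Tn, Cf. replace (r + k - r)%nat with k by lia.
      replace (N - (r + k))%nat with (N - r - k)%nat by lia.
      replace ((r+k)*(r+k)+(r+k))%nat with ((r*r+r) + (k*k+(2*r+1)*k))%nat by ring.
      replace (r + k + r + 1)%nat with (2*r+1+k)%nat by lia.
      pose proof (p_neq0 q hq (N - r - k)). pose proof (p_neq0 q hq k). pose proof (p_neq0 q hq (2*r+1+k)).
      rewrite Cpow_add. cfield. }
  rewrite Csum_scal, cauchy_fin.
  replace (2*r+1+(N-r))%nat with (N+r+1)%nat by lia.
  pose proof (p_neq0 q hq (N - r)). pose proof (p_neq0 q hq (N+r+1)). cfield.
Qed.
End Q.


Lemma tri_eq n : (2 * tri n = n * (n + 1))%nat.
Proof. induction n; simpl tri; lia. Qed.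

Lemma exp3 n : (3 * n * (n + 1) / 2 = n * n + n + tri n)%nat.
Proof.
  replace (3 * n * (n + 1))%nat with ((n * n + n + tri n) * 2)%nat by (pose proof (tri_eq n); lia).
  apply Nat.div_mul. lia.
Qed.

Lemma exp3' m : (3 * S m * (S m - 1) / 2 + S m = 3 * tri m + S m)%nat.
Proof.
  replace (S m - 1)%nat with m by lia.
  replace (3 * S m * m)%nat with ((3 * tri m) * 2)%nat by (pose proof (tri_eq m); lia).
  rewrite Nat.div_mul; lia.
Qed.

Lemma Cmod_Csign n : Cmod (Csign n) = 1.
Proof. unfold Csign. rewrite Cmod_pow, Cmod_opp, Cmod_one. apply pow1. Qed.

Lemma inv_bound x L : 0 < L -> L <= Cmod x -> Cmod (Cinv x) <= / L.
Proof.
  intros HL Hx. assert (x <> Czero) by (intro Z; rewrite Z, Cmod_zero in Hx; lra).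
  rewrite Cmod_inv by auto. apply Rinv_le_contravar; lra.
Qed.

Definition spt q n := Cdiv (Cmul (Csign n) (Cpow q (3 * tri n))) (Cadd Cone (Cpow q n)).
Definition snt q m := Cdiv (Cmul (Csign (S m)) (Cpow q (3 * tri m + S m))) (Cadd Cone (Cpow q (S m))).

Lemma bilat_pos q n : bilat_term q (Z.of_nat n) = spt q n.
Proof.
  unfold spt. destruct n.
  - change (Z.of_nat 0) with Z0. unfold bilat_term. rewrite Csign_0.
    replace (3 * tri 0)%nat with O by reflexivity. rewrite Cpow_0. unfold Cdiv. ring.
  - simpl Z.of_nat. unfold bilat_term. rewrite SuccNat2Pos.id_succ. rewrite exp3.
    f_equal. f_equal. f_equal. pose proof (tri_eq (S n)). lia.
Qed.

Lemma bilat_neg q m : bilat_term q (- Z.of_nat (S m))%Z = snt q m.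
Proof.
  unfold snt. simpl Z.of_nat. simpl Z.opp. unfold bilat_term. rewrite SuccNat2Pos.id_succ.
  rewrite exp3'. reflexivity.
Qed.

Lemma tri_ge n : (n <= tri n)%nat.
Proof. induction n; simpl; lia. Qed.

Section M.
Variable q : Cplx.
Hypothesis hq : Cmod q < 1.
Notation p := (qpoch q q).
Notation pm := (qpoch (Copp q) q).

Lemma r01 : 0 <= Cmod q < 1.
Proof. split; [apply Cmod_ge0|exact hq]. Qed.

Lemma powr_le n k : (k <= n)%nat -> Cmod (Cpow q n) <= Cmod q ^ k.
Proof. intros. rewrite Cmod_pow. apply pow_le_mono_dec; auto. pose proof r01; lra. Qed.

Lemma opp_lb n : 1 - Cmod q <= Cmod (Cadd Cone (Cpow q n)).
Proof.
  pose proof r01. destruct n.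
  - rewrite Cpow_0. assert (Cmod (Cadd Cone Cone) = 2).
    { unfold Cmod; simpl. replace ((1+1)*(1+1)+(0+0)*(0+0)) with (2*2) by ring. rewrite sqrt_square; lra. }
    lra.
  - pose proof (Cmod_add_ge Cone (Cpow q (S n))). rewrite Cmod_one in H0.
    pose proof (powr_le (S n) 1 ltac:(lia)). rewrite pow_1 in H1. lra.
Qed.

Lemma omp_ub n : Cmod (Csub Cone (Cpow q n)) <= 2.
Proof.
  pose proof (Cmod_sub Cone (Cpow q n)). rewrite Cmod_one in H.
  pose proof (powr_le n 0 ltac:(lia)). simpl in H0. lra.
Qed.

Lemma Lq_pos' : 0 < Lq q.
Proof. apply Lq_pos. Qed.

Lemma beta_bound n : Cmod (beta q n) <= / (Lq q * Lq q).
Proof.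
  unfold beta. apply inv_bound. pose proof Lq_pos'. nra.
  rewrite Cmod_mul. pose proof (qpoch_lb q hq (Copp q) n (Cmod_opp q)).
  pose proof (qpoch_lb q hq (Copp q) (S n) (Cmod_opp q)). pose proof Lq_pos'.
  apply Rmult_le_compat; lra.
Qed.

Definition KA := / (Lq q * Lq q).
Lemma KA_pos : 0 <= KA.
Proof. unfold KA. pose proof Lq_pos'. left. apply Rinv_0_lt_compat. nra. Qed.

Lemma aB n : Cmod (Cmul (Cpow q (n*n+n)) (beta q n)) <= KA * Cmod q ^ n.
Proof.
  rewrite Cmod_mul. pose proof (beta_bound n). pose proof (powr_le (n*n+n) n ltac:(lia)).
  pose proof (Cmod_ge0 (Cpow q (n*n+n))). pose proof (Cmod_ge0 (beta q n)).
  unfold KA. rewrite Rmult_comm. apply Rmult_le_compat; auto.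
Qed.

Definition KB := 4 / ((1 - Cmod q) * (1 - Cmod q)).
Lemma KB_pos : 0 <= KB.
Proof. unfold KB. pose proof r01. left. apply Rdiv_lt_0_compat; nra. Qed.

Lemma alphaB n : Cmod (Cmul (Cpow q (n*n+n)) (alpha' q n)) <= KB * Cmod q ^ n.
Proof.
  pose proof r01. rewrite Cmod_mul. unfold alpha'.
  pose proof (opp_neq0 q hq n). pose proof (opp_neq0 q hq (S n)).
  assert (Cmul (Cadd Cone (Cpow q n)) (Cadd Cone (Cpow q (S n))) <> Czero).
  { intro Z. apply (f_equal Cmod) in Z. rewrite Cmod_mul, Cmod_zero in Z.
    apply Rmult_integral in Z. destruct Z as [Z|Z]; apply Cmod_eq0 in Z; auto. }
  rewrite Cmod_div by auto. rewrite !Cmod_mul, Cmod_Csign.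
  assert (Cmod (Cadd Cone Cone) = 2).
  { unfold Cmod; simpl. replace ((1+1)*(1+1)+(0+0)*(0+0)) with (2*2) by ring. rewrite sqrt_square; lra. }
  rewrite H3.
  pose proof (powr_le (tri n) 0 ltac:(lia)). rewrite pow_O in H4.
  pose proof (omp_ub (2*n+1)). pose proof (opp_lb n). pose proof (opp_lb (S n)).
  pose proof (powr_le (n*n+n) n ltac:(lia)).
  pose proof (Cmod_ge0 (Cpow q (tri n))). pose proof (Cmod_ge0 (Csub Cone (Cpow q (2*n+1)))).
  pose proof (Cmod_ge0 (Cpow q (n*n+n))).
  set (a := Cmod (Cpow q (n*n+n))) in *. set (b := Cmod (Cpow q (tri n))) in *.
  set (c := Cmod (Csub Cone (Cpow q (2*n+1)))) in *.
  set (d1 := Cmod (Cadd Cone (Cpow q n))) in *. set (d2 := Cmod (Cadd Cone (Cpow q (S n)))) in *.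
  set (x := Cmod q ^ n) in *.
  assert (2 * 1 * (b * c) <= 4) by nra.
  assert (2 * 1 * (b * c) / (d1 * d2) <= 4 / ((1 - Cmod q) * (1 - Cmod q))).
  { unfold Rdiv. apply Rmult_le_compat; try nra. left. apply Rinv_0_lt_compat. nra.
    apply Rinv_le_contravar; nra. }
  unfold KB. rewrite Rmult_comm. apply Rmult_le_compat; auto.
  unfold Rdiv. apply Rmult_le_pos. nra. left. apply Rinv_0_lt_compat. nra.
Qed.
End M.


Section M2.
Variable q : Cplx.
Hypothesis hq : Cmod q < 1.
Notation p := (qpoch q q).
Notation pm := (qpoch (Copp q) q).

Definition KS := / (1 - Cmod q).
Lemma KS_pos : 0 <= KS.
Proof. unfold KS. pose proof (r01 q hq). left. apply Rinv_0_lt_compat. lra. Qed.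

Lemma sign_pow_bound n e k : (k <= e)%nat ->
  Cmod (Cdiv (Cmul (Csign n) (Cpow q e)) (Cadd Cone (Cpow q n))) <= KS * Cmod q ^ k.
Proof.
  intros Hk. pose proof (r01 q hq). rewrite Cmod_div by (apply opp_neq0; auto).
  rewrite Cmod_mul, Cmod_Csign, Rmult_1_l.
  pose proof (powr_le q hq e k Hk). pose proof (opp_lb q hq n). pose proof (Cmod_ge0 (Cpow q e)).
  unfold KS, Rdiv. apply Rle_trans with (Cmod q ^ k * / (1 - Cmod q)); [|right; ring].
  apply Rmult_le_compat; auto.
  left. apply Rinv_0_lt_compat. lra. apply Rinv_le_contravar; lra.
Qed.

Lemma sp_bound n : Cmod (spt q n) <= KS * Cmod q ^ n.
Proof. apply sign_pow_bound. pose proof (tri_ge n). lia. Qed.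

Lemma sn_bound n : Cmod (snt q n) <= KS * Cmod q ^ n.
Proof.
  unfold snt. eapply Rle_trans. apply sign_pow_bound with (k := S n). lia.
  pose proof (r01 q hq). pose proof KS_pos. apply Rmult_le_compat_l; auto.
  apply pow_le_mono_dec; [lra|lia].
Qed.

Definition bT n := Cdiv (Cmul (Cmul (Csign n) (Cpow q (3 * n * (n + 1) / 2)))
                                 (Csub Cone (Cpow q (2 * n + 1))))
                (Cmul (Cadd Cone (Cpow q n)) (Cadd Cone (Cpow q (S n)))).

Lemma bT_split n : bT n = Cadd (spt q n) (snt q n).
Proof.
  unfold bT, spt, snt. rewrite exp3.
  pose proof (opp_neq0 q hq n) as N1. pose proof (opp_neq0 q hq (S n)) as N2.
  replace (n * n + n + tri n)%nat with (3 * tri n)%nat by (pose proof (tri_eq n); lia).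
  rewrite Csign_S. cnorm. cnorm_in N2. cfield.
Qed.

Lemma alpha_bT n : Cmul (Cpow q (n*n+n)) (alpha' q n) = Cmul (Cadd Cone Cone) (bT n).
Proof.
  unfold alpha', bT. rewrite exp3.
  pose proof (opp_neq0 q hq n) as N1. pose proof (opp_neq0 q hq (S n)) as N2.
  rewrite (Cpow_add q (n*n+n) (tri n)). cfield.
Qed.

Definition aT n := Cdiv (Cpow q (n * n + n))
                (Cmul (Cmul (pm n) (pm n)) (Cadd Cone (Cpow q (S n)))).

Lemma aT_eq n : aT n = Cmul (Cpow q (n*n+n)) (beta q n).
Proof.
  unfold aT, beta. rewrite qpoch_S. pose proof (pm_neq0 q hq n). pose proof (opp_neq0 q hq (S n)) as N2.
  cnorm_in N2. rewrite Cpow_S. cfield.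
Qed.

End M2.


Theorem mainTheorem4 (q : Cplx) (hq : Cmod q < 1) :
  exists (P S1 S2 Sp Sn : Cplx),
    qpoch_inf q q P /\
    Cseries (fun n => Cdiv (Cpow q (n * n + n))
                (Cmul (Cmul (qpoch (Copp q) q n) (qpoch (Copp q) q n))
                      (Cadd Cone (Cpow q (S n))))) S1 /\
    Cseries (fun n => Cdiv (Cmul (Cmul (Csign n) (Cpow q (3 * n * (n + 1) / 2)))
                                 (Csub Cone (Cpow q (2 * n + 1))))
                (Cmul (Cadd Cone (Cpow q n)) (Cadd Cone (Cpow q (S n))))) S2 /\
    Cseries (fun n => bilat_term q (Z.of_nat n)) Sp /\
    Cseries (fun m => bilat_term q (- Z.of_nat (S m))%Z) Sn /\
    S1 = Cmul (Cdiv (Cadd Cone Cone) P) S2 /\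
    S1 = Cmul (Cdiv (Cadd Cone Cone) P) (Cadd Sp Sn).
Proof.
  pose proof (r01 q hq) as Hr.
  destruct (qpoch_conv q hq q eq_refl) as [P [HP HP0]].
  destruct (series_geom (aT q) (KA q) (Cmod q) (KA_pos q) Hr) as [S1 HS1].
  { intro k. rewrite aT_eq by auto. apply aB; auto. }
  destruct (series_geom (spt q) (KS q) (Cmod q) (KS_pos q hq) Hr) as [Sp HSp].
  { intro k. apply sp_bound; auto. }
  destruct (series_geom (snt q) (KS q) (Cmod q) (KS_pos q hq) Hr) as [Sn HSn].
  { intro k. apply sn_bound; auto. }
  assert (HS2 : Cseries (bT q) (Cadd Sp Sn)).
  { unfold Cseries. eapply Ccv_ext; [|apply Ccv_add; [exact HSp|exact HSn]].
    intro n. simpl. rewrite <- Csum_add. apply Csum_ext_lt. intros. symmetry. apply bT_split; auto. }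
  assert (Hmain : S1 = Cmul (Cdiv (Cadd Cone Cone) P) (Cadd Sp Sn)).
  { set (p := qpoch q q).
    assert (Hp : forall n, p n <> Czero) by (intro; apply p_neq0; auto).
    assert (HLp : forall n, Lq q <= Cmod (p n)) by (intro; apply qpoch_lb; auto).
    assert (HUp : forall n, Cmod (p n) <= Uq q) by (intro; apply qpoch_ub; auto).
    pose proof (Lq_pos q) as HL.
    assert (HU0 : 0 <= Uq q) by (eapply Rle_trans; [apply Cmod_ge0|apply (HUp O)]).
    set (f := fun N n => Cmul (p N) (Cmul (Cpow q (n*n+n)) (Cdiv (beta q n) (p (N-n)%nat)))).
    set (g := fun n => Cmul (Cpow q (n*n+n)) (beta q n)).
    set (f' := fun N r => Cmul (p N) (Cdiv (Cmul (Cpow q (r*r+r)) (alpha' q r)) (Cmul (p (N - r)%nat) (p (N + r + 1)%nat)))).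
    set (g' := fun r => Cdiv (Cmul (Cpow q (r*r+r)) (alpha' q r)) P).
    assert (L1 : Ccv (fun N => Csum (f N) (S N)) S1).
    { apply (tannery f g (Uq q * KA q * / Lq q) (Cmod q)); auto.
      - apply Rmult_le_pos. apply Rmult_le_pos; auto. apply KA_pos. left; apply Rinv_0_lt_compat; auto.
      - intros N n Hn. unfold f.
        replace (Cmul (p N) (Cmul (Cpow q (n*n+n)) (Cdiv (beta q n) (p (N-n)%nat)))) with
          (Cmul (Cmul (p N) (g n)) (Cinv (p (N - n)%nat))) by (unfold g, Cdiv; ring).
        rewrite !Cmod_mul. pose proof (aB q hq n). fold (g n) in H.
        pose proof (inv_bound _ _ HL (HLp (N-n)%nat%nat)).
        pose proof (Cmod_ge0 (p N)). pose proof (Cmod_ge0 (g n)). pose proof (Cmod_ge0 (Cinv (p (N-n)%nat))).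
        apply Rle_trans with (Uq q * (KA q * Cmod q ^ n) * / Lq q); [|right; ring].
        apply Rmult_le_compat; auto. apply Rmult_le_pos; auto. apply Rmult_le_compat; auto.
      - intro n. eapply Rle_trans; [apply aB; auto|].
        pose proof (KA_pos q). pose proof (pow_le (Cmod q) n (proj1 Hr)).
        assert (1 <= Uq q * / Lq q).
        { apply Rmult_le_reg_r with (Lq q); auto. rewrite Rmult_assoc, Rinv_l by lra.
          rewrite Rmult_1_l, Rmult_1_r. eapply Rle_trans; [apply (HLp O)|apply HUp]. }
        assert (0 <= KA q * Cmod q ^ n) by (apply Rmult_le_pos; auto).
        apply Rle_trans with (KA q * Cmod q ^ n * (Uq q * / Lq q)); [nra|right; ring].
      - intro n. unfold f.
        assert (E : Cmul P (Cmul (Cpow q (n*n+n)) (Cdiv (beta q n) P)) = g n) by (unfold g; field; auto).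
        rewrite <- E. apply Ccv_mul; auto. apply Ccv_scal. apply Ccv_div; auto. apply Ccv_const.
        apply Ccv_shift_sub; auto.
      - unfold Cseries. eapply Ccv_ext; [|exact HS1]. intro n. apply Csum_ext_lt. intros. unfold g. apply aT_eq; auto. }
    assert (L2 : Ccv (fun N => Csum (f' N) (S N)) (Cmul (Cdiv (Cadd Cone Cone) P) (Cadd Sp Sn))).
    { apply (tannery f' g' (Uq q * KB q * / Lq q * / Lq q) (Cmod q)); auto.
      - assert (0 <= / Lq q) by (left; apply Rinv_0_lt_compat; auto). pose proof (KB_pos q).
        apply Rmult_le_pos; auto. apply Rmult_le_pos; auto. apply Rmult_le_pos; auto.
      - intros N n Hn. unfold f'.
        replace (Cmul (p N) (Cdiv (Cmul (Cpow q (n*n+n)) (alpha' q n)) (Cmul (p (N - n)%nat) (p (N + n + 1)%nat)))) with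
          (Cmul (Cmul (Cmul (p N) (Cmul (Cpow q (n*n+n)) (alpha' q n))) (Cinv (p (N - n)%nat))) (Cinv (p (N + n + 1)%nat)))
          by (field; auto).
        rewrite !Cmod_mul. pose proof (alphaB q hq n).
        pose proof (inv_bound _ _ HL (HLp (N-n)%nat%nat)). pose proof (inv_bound _ _ HL (HLp (N+n+1)%nat)).
        pose proof (Cmod_ge0 (p N)). pose proof (Cmod_ge0 (Cmul (Cpow q (n*n+n)) (alpha' q n))).
        rewrite Cmod_mul in H3.
        pose proof (Cmod_ge0 (Cinv (p (N-n)%nat))). pose proof (Cmod_ge0 (Cinv (p (N+n+1)%nat))).
        rewrite Cmod_mul in H.
        apply Rle_trans with (Uq q * (KB q * Cmod q ^ n) * / Lq q * / Lq q); [|right; ring].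
        apply Rmult_le_compat; auto. apply Rmult_le_pos; auto. apply Rmult_le_pos; auto.
        apply Rmult_le_compat; auto. apply Rmult_le_pos; auto.
        apply Rmult_le_compat; auto.
      - intro n. unfold g'. rewrite Cmod_div by auto.
        pose proof (alphaB q hq n). pose proof (Ccv_mod_ge _ _ _ HP HLp).
        pose proof (Cmod_ge0 (Cmul (Cpow q (n * n + n)) (alpha' q n))).
        pose proof (KB_pos q). pose proof (pow_le (Cmod q) n (proj1 Hr)).
        apply Rle_trans with (KB q * Cmod q ^ n * / Lq q).
        + unfold Rdiv. apply Rmult_le_compat; auto. left; apply Rinv_0_lt_compat; lra.
          apply Rinv_le_contravar; lra.
        + apply Rle_trans with (KB q * Cmod q ^ n * / Lq q * (Uq q * / Lq q)).
          * assert (1 <= Uq q * / Lq q).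
            { apply Rmult_le_reg_r with (Lq q); auto. rewrite Rmult_assoc, Rinv_l by lra.
              rewrite Rmult_1_l, Rmult_1_r. eapply Rle_trans; [apply (HLp O)|apply HUp]. }
            assert (0 <= KB q * Cmod q ^ n * / Lq q).
            { apply Rmult_le_pos. apply Rmult_le_pos; auto. left; apply Rinv_0_lt_compat; lra. }
            nra.
          * right. ring.
      - intro n. unfold f'.
        assert (E : Cmul P (Cdiv (Cmul (Cpow q (n*n+n)) (alpha' q n)) (Cmul P P)) = g' n) by (unfold g'; field; auto).
        rewrite <- E. apply Ccv_mul; auto. apply Ccv_div; auto.
        { intro Z. apply (f_equal Cmod) in Z. rewrite Cmod_mul, Cmod_zero in Z.
          apply Rmult_integral in Z. destruct Z as [Z|Z]; apply Cmod_eq0 in Z; auto. }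
        apply Ccv_const. apply Ccv_mul. apply Ccv_shift_sub; auto.
        eapply Ccv_ext; [|apply (Ccv_shift_add _ _ (n + 1)%nat HP)]. intro N. unfold p. f_equal. lia.
      - unfold Cseries. eapply Ccv_ext; [|apply Ccv_scal; exact HS2].
        intro n. simpl. rewrite <- Csum_scal. apply Csum_ext_lt. intros k _. unfold g'.
        rewrite alpha_bT by auto. field; auto. }
    assert (L3 : forall N, Csum (f N) (S N) = Csum (f' N) (S N)).
    { intro N. unfold f, f'. rewrite !Csum_scal. f_equal. apply fin_bailey; auto. }
    apply (Ccv_unique (fun N => Csum (f N) (S N))); auto.
    eapply Ccv_ext; [|exact L2]. intro N. symmetry. apply L3. }
  exists P, S1, (Cadd Sp Sn), Sp, Sn. repeat split; auto.
  - unfold Cseries. eapply Ccv_ext; [|exact HSp]. intro n. apply Csum_ext_lt. intros. symmetry. apply bilat_pos.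
  - unfold Cseries. eapply Ccv_ext; [|exact HSn]. intro n. apply Csum_ext_lt. intros. symmetry. apply bilat_neg.
Qed.
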